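(* Let $E_a\subseteq E$ be a set of directed links without self-loops, with maximum out-degree $D_a^+$ and maximum in-degree $D_a^-$ in $G_a=(V,E_a)$, and let $D$ be the maximum number of neighbors (excluding itself) of any node in the base topology $G$. Then the maximum degree $D_c$ of the conflict graph of $E_a$ satisfies $$D_c\le(D+1)\big(D_a^++D_a^-\big).$$
   Context: $G=(V,E)$ is a bidirected directed base topology on $V=\{1,\dots,n\}$ (with self-loops, which are not counted as neighbors). Communication model: two distinct directed links $(i,j),(k,l)$ (with $i\ne j$, $k\ne l$) can be scheduled in the same transmission slot iff (a) $i\ne l$ and $j\ne k$ (half-duplex), and (b) if $i\ne k$ then $(i,l)\notin E$ and $(k,j)\notin E$ (interference); otherwise they conflict. The conflict graph of $E_a$ is the undirected graph with vertex set $E_a$ and an edge between every conflicting pair; $D_c$ is its maximum vertex degree. In-/out-degrees in $G_a$ are $d_a^-(j)=|\{i:(i,j)\in E_a\}|$, $d_a^+(j)=|\{i:(j,i)\in E_a\}|$, with maxima $D_a^-,D_a^+$. *)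

(* Defs.v *)
From mathcomp Require Import all_boot all_order.
Set Implicit Arguments. Unset Strict Implicit. Unset Printing Implicit Defensive.

Section Defs.
Variable n : nat.
Notation V := 'I_n.
Notation link := (V * V)%type.

(* Compatibility of two links (i,j),(k,l) in the base topology E
   (half-duplex + interference conditions). *)
Definition compatible (E : rel V) (e f : link) : bool :=
  let: (i, j) := e in let: (k, l) := f in
  [&& i != l, j != k & (i != k) ==> (~~ E i l && ~~ E k j)].

Definition conflict (E : rel V) (e f : link) : bool := ~~ compatible E e f.

Definition conflict_deg (E : rel V) (Ea : {set link}) (e : link) : nat :=
  #|[set f in Ea | (f != e) && (conflict E e f || conflict E f e)]|.

Definition Dc (E : rel V) (Ea : {set link}) : nat :=
  \max_(e in Ea) conflict_deg E Ea e.

Definition in_deg (Ea : {set link}) (j : V) : nat := #|[set i | (i, j) \in Ea]|.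
Definition out_deg (Ea : {set link}) (j : V) : nat := #|[set i | (j, i) \in Ea]|.
Definition Da_in (Ea : {set link}) : nat := \max_(j : V) in_deg Ea j.
Definition Da_out (Ea : {set link}) : nat := \max_(j : V) out_deg Ea j.

Definition nbr_count (E : rel V) (i : V) : nat := #|[set j | (j != i) && E i j]|.
Definition Dmax (E : rel V) : nat := \max_(i : V) nbr_count E i.
End Defs.

(* Main.v *)
Require Import Defs.
From mathcomp Require Import all_boot all_order.

Lemma card_bigcup_seq (T I : finType) (r : seq I) (S : I -> {set T}) :
  #|\bigcup_(l <- r) S l| <= \sum_(l <- r) #|S l|.
Proof.
elim: r => [|a r IH]; first by rewrite !big_nil cards0.
rewrite !big_cons; apply: leq_trans (leq_card_setU _ _) _.
by rewrite leq_add2l.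
Qed.

Lemma card_bigcup_set (T I : finType) (A : {set I}) (S : I -> {set T}) :
  #|\bigcup_(l in A) S l| <= \sum_(l in A) #|S l|.
Proof. rewrite -big_enum -[X in _ <= X]big_enum; exact: card_bigcup_seq. Qed.

Lemma bound_in (n : nat) (E : rel 'I_n) (Ea : {set 'I_n * 'I_n}) (i : 'I_n) :
  reflexive E ->
  #|[set f in Ea | E i f.2]| <= (Dmax E + 1) * Da_in Ea.
Proof.
move=> Er.
set N := [set l | E i l].
have sub : [set f in Ea | E i f.2] \subset
    \bigcup_(l in N) [set (k, l) | k in [set k | (k, l) \in Ea]].
  apply/subsetP => -[k l]; rewrite inE /= => /andP [fE El].
  apply/bigcupP; exists l.
    by rewrite inE El.
  by apply/imsetP; exists k; rewrite // inE.
apply: leq_trans (subset_leq_card sub) _.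
apply: leq_trans; first exact: card_bigcup_set.
apply: (@leq_trans (\sum_(l in N) #|[set k | (k, l) \in Ea]|)).
  by apply: leq_sum => l _; exact: leq_imset_card.
apply: (@leq_trans (\sum_(l in N) Da_in Ea)).
  apply: leq_sum => l _; exact: (leq_bigmax (F := in_deg Ea) l).
rewrite sum_nat_const leq_mul2r; apply/orP; right.
have : N \subset i |: [set j | (j != i) && E i j].
  apply/subsetP => l; rewrite !inE => El.
  by case: eqP => //= _; rewrite El.
move/subset_leq_card; move/leq_trans; apply.
rewrite cardsU1 addnC leq_add //; last by case: (_ \notin _).
exact: (leq_bigmax (F := nbr_count E) i).
Qed.

Lemma bound_out (n : nat) (E : rel 'I_n) (Ea : {set 'I_n * 'I_n}) (j : 'I_n) :
  reflexive E -> symmetric E ->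
  #|[set f in Ea | E f.1 j]| <= (Dmax E + 1) * Da_out Ea.
Proof.
move=> Er Es.
set N := [set k | E j k].
have sub : [set f in Ea | E f.1 j] \subset
    \bigcup_(k in N) [set (k, l) | l in [set l | (k, l) \in Ea]].
  apply/subsetP => -[k l]; rewrite inE /= => /andP [fE El].
  apply/bigcupP; exists k.
    by rewrite inE Es El.
  by apply/imsetP; exists l; rewrite // inE.
apply: leq_trans (subset_leq_card sub) _.
apply: leq_trans; first exact: card_bigcup_set.
apply: (@leq_trans (\sum_(l in N) #|[set k | (l, k) \in Ea]|)).
  by apply: leq_sum => l _; exact: leq_imset_card.
apply: (@leq_trans (\sum_(l in N) Da_out Ea)).
  apply: leq_sum => l _; exact: (leq_bigmax (F := out_deg Ea) l).
rewrite sum_nat_const leq_mul2r; apply/orP; right.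
have : N \subset j |: [set k | (k != j) && E j k].
  apply/subsetP => l; rewrite !inE => El.
  by case: eqP => //= _; rewrite El.
move/subset_leq_card; move/leq_trans; apply.
rewrite cardsU1 addnC leq_add //; last by case: (_ \notin _).
exact: (leq_bigmax (F := nbr_count E) j).
Qed.

Theorem lemma4 (n : nat) (E : rel 'I_n) (Ea : {set 'I_n * 'I_n}) :
  symmetric E ->
  reflexive E ->
  (forall e, e \in Ea -> E e.1 e.2) ->
  (forall e, e \in Ea -> e.1 != e.2) ->
  Dc E Ea <= (Dmax E + 1) * (Da_out Ea + Da_in Ea).
Proof.
move=> Es Er _ Hne.
apply/bigmax_leqP => -[i j] eIn.
rewrite /conflict_deg.
have sub : [set f in Ea | (f != (i, j)) &&
     (conflict E (i, j) f || conflict E f (i, j))] \subset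
   [set f in Ea | E f.1 j] :|: [set f in Ea | E i f.2].
  apply/subsetP => -[k l]; rewrite !inE /= => /andP [fE /andP [_ C]].
  rewrite fE /=.
  move: C; rewrite /conflict /compatible.
  case: (eqVneq i l) => [<-|Hil]; first by rewrite Er orbT.
  case: (eqVneq j k) => [<-|Hjk]; first by rewrite Er.
  case: (eqVneq k j) => [Hkj|Hkj]; first by rewrite Hkj eqxx in Hjk.
  case: (eqVneq l i) => [Hli|Hli]; first by rewrite Hli eqxx in Hil.
  rewrite /= !implyNb.
  case: (eqVneq i k) => [Hik|Hik] //=.
  by rewrite !negb_and !negbK => /orP [/orP[]|/orP[]] ->; rewrite ?orbT.
apply: leq_trans (subset_leq_card sub) _.
apply: leq_trans (leq_card_setU _ _) _.
rewrite mulnDr leq_add //; [exact: bound_out | exact: bound_in].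
Qed.
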